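(* Let $F$ be an edge-transitive graph, fix an edge $xy$ of $F$, let $F'=F\setminus xy$, and for an integer $t\ge2$ let $F'_t$ be the graph obtained from $F'[K_t]$ by adding one edge between a vertex of the copy of $K_t$ replacing $x$ and a vertex of the copy of $K_t$ replacing $y$. If $G$ is a regular $F$-saturated graph, then for every $t\ge2$ the graph $G[K_t]$ is regular and $F'_t$-oversaturated. Moreover, if $F=K_s$ for some $s\ge3$, then $G[K_t]$ is $F'_t$-saturated. In particular, for every $t\ge2$ and $F=K_s$ with $s\ge 3$, $\liminf_{n\to\infty}\frac{\mathrm{rsat}(n,F'_t)}{n^2}=0$.
   Context: All graphs are finite and simple. For graphs $G,H$, the blow-up $G[H]$ is obtained by replacing each vertex of $G$ by a copy of $H$ and, for every edge $uv$ of $G$, adding all edges between the copies corresponding to $u$ and $v$. $K_t$ is the complete graph on $t$ vertices. A graph $G$ is $F$-saturated if it contains no copy of $F$ but adding any non-edge creates a copy of $F$; $G$ is $F$-oversaturated if adding any non-edge $e$ creates a copy of $F$ containing $e$ ($G$ need not be $F$-free). $\mathrm{rsat}(n,F)$ is the smallest number of edges of a regular $n$-vertex $F$-saturated graph, the $\liminf$ being over $n$ for which it is defined. A graph is edge-transitive if its automorphism group acts transitively on its edges. *)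

(* Defs.v *)
From mathcomp Require Import all_boot all_order all_algebra all_fingroup.
Set Implicit Arguments. Unset Strict Implicit. Unset Printing Implicit Defensive.
Import Order.TTheory GRing.Theory Num.Theory.


Definition simple_graph (V : finType) (e : rel V) := symmetric e /\ irreflexive e.

Definition complete_rel (s : nat) : rel 'I_s := fun i j => i != j.
Arguments complete_rel s : clear implicits.

Definition add_edge (V : finType) (e : rel V) (u v : V) : rel V :=
  fun a b => e a b || ((a == u) && (b == v)) || ((a == v) && (b == u)).

Definition del_edge (V : finType) (e : rel V) (x y : V) : rel V :=
  fun a b => e a b && ~~ (((a == x) && (b == y)) || ((a == y) && (b == x))).

Definition blowup_clique (V : finType) (e : rel V) (t : nat) : rel (V * 'I_t) :=
  fun p q => ((p.1 == q.1) && (p.2 != q.2)) || e p.1 q.1.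
Arguments blowup_clique {V} e t.

Definition Fprime_t (V : finType) (eF : rel V) (x y : V) (t : nat) (a b : 'I_t)
  : rel (V * 'I_t) :=
  add_edge (blowup_clique (del_edge eF x y) t) (x, a) (y, b).

Definition contains (VF VG : finType) (eF : rel VF) (eG : rel VG) :=
  exists f : VF -> VG, injective f /\ forall u v, eF u v -> eG (f u) (f v).

Definition F_saturated (VF VG : finType) (eF : rel VF) (eG : rel VG) :=
  ~ contains eF eG /\
  forall u v : VG, u != v -> ~~ eG u v -> contains eF (add_edge eG u v).

Definition F_oversaturated (VF VG : finType) (eF : rel VF) (eG : rel VG) :=
  forall u v : VG, u != v -> ~~ eG u v ->
    exists f : VF -> VG, [/\ injective f,
      (forall a b, eF a b -> add_edge eG u v (f a) (f b)) &
      exists a b, [/\ eF a b, f a = u & f b = v]].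

Definition degree (V : finType) (e : rel V) (v : V) := #|[set w | e v w]|.

Definition regular (V : finType) (e : rel V) :=
  exists d, forall v, degree e v = d.

Definition num_edges (V : finType) (e : rel V) := #|[set p : V * V | e p.1 p.2]|./2.

Definition edge_transitive (V : finType) (e : rel V) :=
  forall u v u' v', e u v -> e u' v' ->
    exists s : {perm V}, (forall a b, e (s a) (s b) = e a b) /\
      ((s u = u' /\ s v = v') \/ (s u = v' /\ s v = u')).

(* "rsat(n,F) <= m": there is a regular n-vertex F-saturated graph with at most m edges *)
Definition rsat_le (VF : finType) (eF : rel VF) (n m : nat) :=
  exists eG : rel 'I_n, [/\ simple_graph eG, regular eG, F_saturated eF eG &
                            num_edges eG <= m].

(* liminf_{n -> oo} rsat(n,F)/n^2 = 0, the liminf over n for which rsat(n,F) is defined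
   (the sequence is nonnegative, so this says liminf <= 0) *)
Definition liminf_rsat_over_n2_is_0 (VF : finType) (eF : rel VF) :=
  forall eps : rat, (0 < eps)%R -> forall N : nat, exists n : nat, exists m : nat,
    (N <= n)%N /\ rsat_le eF n m /\ (m%:R < eps * (n ^ 2)%N%:R)%R.

(* Main.v *)
Require Import Defs.
From mathcomp Require Import all_boot all_order all_algebra all_fingroup zify lra.
Set Implicit Arguments. Unset Strict Implicit. Unset Printing Implicit Defensive.

Lemma blowup_degree (V : finType) (e : rel V) t d :
  simple_graph e -> (forall v, degree e v = d) ->
  forall p, degree (blowup_clique e t) p = t.-1 + d * t.
Proof.
case=> _ irr hd [g i].
rewrite /degree.
have -> : [set q | blowup_clique e t (g,i) q] =
   setX [set g] [set~ i] :|: setX [set w | e g w] [set: 'I_t].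
  apply/setP => -[h j]; rewrite !inE /blowup_clique /=.
  by rewrite (eq_sym h) (eq_sym j) andbT.
rewrite cardsU.
have -> : setX [set g] [set~ i] :&: setX [set w | e g w] [set: 'I_t] = set0.
  apply/setP => -[h j]; rewrite !inE /=.
  by rewrite andbT; case: eqP => //= ->; rewrite irr andbF.
rewrite cards0 subn0 !cardsX cards1 cardsC1 cardsT card_ord mul1n.
by have := hd g; rewrite /degree => ->.
Qed.

Lemma blowup_regular (V : finType) (e : rel V) t :
  simple_graph e -> regular e -> regular (blowup_clique e t).
Proof.
move=> sG [d hd]; exists (t.-1 + d * t); exact: blowup_degree.
Qed.

Lemma add_edge_sym (V : finType) (e : rel V) u v p q :
  add_edge e u v p q = add_edge e v u p q.
Proof. by rewrite /add_edge -orbA (orbC ((p == u) && _)) orbA. Qed.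

Lemma lift_embed (VF VG : finType) (eF : rel VF) (eG : rel VG) (x y : VF) t
  (a b : 'I_t) (psi : VF -> VG) gx gy (ix iy : 'I_t) :
  injective psi -> (forall u v, eF u v -> add_edge eG gx gy (psi u) (psi v)) ->
  psi x = gx -> psi y = gy -> x != y ->
  exists f : VF * 'I_t -> VG * 'I_t, [/\ injective f,
      (forall p q, Fprime_t eF x y a b p q ->
         add_edge (blowup_clique eG t) (gx,ix) (gy,iy) (f p) (f q)),
      f (x,a) = (gx,ix) & f (y,b) = (gy,iy)].
Proof.
move=> pinj pe px py nxy.
pose pi w : {perm 'I_t} := if w == x then tperm a ix else if w == y then tperm b iy else 1%g.
exists (fun p => (psi p.1, pi p.1 p.2)).
have fx : (psi x, pi x a) = (gx, ix) by rewrite /pi eqxx tpermL px.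
have fy : (psi y, pi y b) = (gy, iy) by rewrite /pi eq_sym (negbTE nxy) eqxx tpermL py.
split => //.
- move=> [w k] [w' k'] /= [/pinj ew]; subst w' => /perm_inj -> //.
- move=> [w k] [w' k'] /=; rewrite /Fprime_t /add_edge.
  case/orP => [/orP [H|H]|H].
  + move: H; rewrite /blowup_clique /=.
    case/orP => [/andP [/eqP ew nk] | H].
      subst w'; by rewrite eqxx (inj_eq perm_inj) nk.
    move: H; rewrite /del_edge => /andP [ef nxy'].
    have := pe _ _ ef; rewrite /add_edge.
    case/orP => [/orP [E|/andP [/eqP E1 /eqP E2]] | /andP [/eqP E1 /eqP E2]].
    * by rewrite E !orbT.
    * move: E1 E2; rewrite -px -py => /pinj E1 /pinj E2; subst.
      by rewrite !eqxx in nxy'.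
    * move: E1 E2; rewrite -px -py => /pinj E1 /pinj E2; subst.
      by rewrite !eqxx orbT in nxy'.
  + case/andP: H => /eqP [-> ->] /eqP [-> ->]; rewrite fx fy; by rewrite !eqxx orbT.
  + case/andP: H => /eqP [-> ->] /eqP [-> ->]; rewrite fx fy; by rewrite !eqxx !orbT.
Qed.

Lemma part1_over (VF : finType) (eF : rel VF) : simple_graph eF -> edge_transitive eF ->
   forall x y : VF, eF x y ->
   forall (VG : finType) (eG : rel VG), F_saturated eF eG ->
   forall (t : nat) (a b : 'I_t),
     F_oversaturated (Fprime_t eF x y a b) (blowup_clique eG t).
Proof.
move=> [symF irrF] et x y exy VG eG [nocont sat] t a b [g i] [h j] neq nadj.
have nxy : x != y by apply/eqP => E; subst y; rewrite irrF in exy.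
have gh : g != h.
  apply/eqP => E; subst h; move: nadj; rewrite /blowup_clique /= eqxx /=.
  have -> : i != j by apply: contra neq => /eqP ->.
  by [].
have ngh : ~~ eG g h by move: nadj; rewrite /blowup_clique /= negb_or => /andP [].
have [phi [injphi hphi]] := sat g h gh ngh.
case: (boolP [exists u, exists v, eF u v && (phi u == g) && (phi v == h)]);
  last first.
  move=> none; exfalso; apply: nocont; exists phi; split => // u v euv.
  have := hphi u v euv; rewrite /add_edge.
  case/orP=> [/orP [//|/andP [/eqP pu /eqP pv]]|/andP [/eqP pu /eqP pv]].
    by move/negP: none; case; apply/existsP; exists u; apply/existsP; exists v;
       rewrite euv pu pv !eqxx.
  move/negP: none; case; apply/existsP; exists v; apply/existsP; exists u.
  by rewrite symF euv pu pv !eqxx.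
move=> /existsP [u /existsP [v /andP [/andP [euv /eqP pu] /eqP pv]]].
have [sp [spres hs]] := et x y u v exy euv.
pose psi := fun w => phi (sp w).
have psiinj : injective psi by move=> w1 w2 /injphi /perm_inj.
have psie : forall w1 w2, eF w1 w2 -> add_edge eG g h (psi w1) (psi w2).
  by move=> w1 w2 e12; apply: hphi; rewrite spres.
case: hs => [[sx sy]|[sx sy]].
- have px : psi x = g by rewrite /psi sx pu.
  have py : psi y = h by rewrite /psi sy pv.
  have [f [finj fe fx fy]] := @lift_embed _ _ eF eG x y t a b psi g h i j psiinj psie
    px py nxy.
  exists f; split => //; exists (x,a), (y,b); split => //.
  by rewrite /Fprime_t /add_edge !eqxx orbT.
- have psie' : forall w1 w2, eF w1 w2 -> add_edge eG h g (psi w1) (psi w2).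
    by move=> w1 w2 /psie; rewrite add_edge_sym.
  have px : psi x = h by rewrite /psi sx pv.
  have py : psi y = g by rewrite /psi sy pu.
  have [f [finj fe fx fy]] := @lift_embed _ _ eF eG x y t a b psi h g j i psiinj psie'
    px py nxy.
  exists f; split => //.
    by move=> p q /fe; rewrite add_edge_sym.
  exists (y,b), (x,a); split => //.
  by rewrite /Fprime_t /add_edge !eqxx !orbT.
Qed.

Lemma complete_simple s : simple_graph (complete_rel s).
Proof. by split; [move=> i j; rewrite /complete_rel eq_sym | move=> i; rewrite /complete_rel eqxx]. Qed.

Lemma complete_et s : edge_transitive (complete_rel s).
Proof.
move=> u v u' v' huv hu'v'.
exists (tperm u u' * tperm (tperm u u' v) v')%g; split.
  by move=> p q; rewrite /complete_rel (inj_eq perm_inj).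
left; rewrite !permM tpermL; split; last by rewrite tpermL.
apply: tpermD => //.
  by rewrite -{2}(tpermL u u') (inj_eq perm_inj) eq_sym.
by rewrite eq_sym.
Qed.

Lemma proj_card (VG : finType) t (D : {set VG * 'I_t}) :
  #|D| <= #|[set p.1 | p in D]| * t.
Proof.
rewrite -[X in _ * X]card_ord -cardsT -cardsX; apply: subset_leq_card.
apply/subsetP => -[g i] hD; rewrite in_setX inE andbT.
by apply/imsetP; exists (g,i).
Qed.

Lemma clique_contains (VG : finType) (eG : rel VG) s (S : {set VG}) :
  s <= #|S| -> (forall u v, u \in S -> v \in S -> u != v -> eG u v) ->
  contains (complete_rel s) eG.
Proof.
move=> hs hcl.
exists (fun i : 'I_s => enum_val (widen_ord hs i)); split.
  by move=> i j /enum_val_inj /(congr1 val) /= /val_inj.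
move=> i j; rewrite /complete_rel => nij; apply: hcl; rewrite ?enum_valP //.
rewrite (inj_eq enum_val_inj); apply: contra nij => /eqP /(congr1 val) /= E.
by apply/eqP/val_inj.
Qed.

Lemma full_fibers (VG : finType) (eG : rel VG) s t (D : {set VG * 'I_t}) :
  0 < t -> 0 < s -> ~ contains (complete_rel s) eG ->
  (forall u v, u \in D -> v \in D -> u != v -> blowup_clique eG t u v) ->
  #|D| = s.-1 * t -> forall w, w.1 \in [set p.1 | p in D] -> w \in D.
Proof.
move=> t0 s0 nc hcl cD.
set P := [set p.1 | p in D].
have hP : #|P| < s.
  rewrite ltnNge; apply/negP => hs; apply: nc; apply: (clique_contains hs).
  move=> g h /imsetP [p pD ->] /imsetP [q qD ->] ne.
  have pq : p != q by apply: contra ne => /eqP ->.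
  by have := hcl p q pD qD pq; rewrite /blowup_clique (negbTE ne).
have sub : D \subset setX P [set: 'I_t].
  apply/subsetP => -[g i] hD; rewrite in_setX inE andbT.
  by apply/imsetP; exists (g,i).
have eqD : D = setX P [set: 'I_t].
  apply/eqP; rewrite eqEcard sub cardsX cardsT card_ord cD leq_mul2r.
  apply/orP; right; lia.
move=> [g i] wP; rewrite eqD in_setX inE andbT; exact wP.
Qed.

Lemma card_avoid s t (z : 'I_s) : #|[set p : 'I_s * 'I_t | p.1 != z]| = s.-1 * t.
Proof.
have -> : [set p : 'I_s * 'I_t | p.1 != z] = setX [set~ z] [set: 'I_t].
  by apply/setP => -[w k]; rewrite !inE andbT.
by rewrite cardsX cardsC1 cardsT !card_ord.
Qed.

Lemma card_avoid2 s t (x y : 'I_s) : x != y ->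
  #|[set p : 'I_s * 'I_t | (p.1 != x) && (p.1 != y)]| = (s - 2) * t.
Proof.
move=> nxy.
have -> : [set p : 'I_s * 'I_t | (p.1 != x) && (p.1 != y)] = setX (~: [set x; y]) [set: 'I_t].
  by apply/setP => -[w k]; rewrite !inE andbT negb_or.
rewrite cardsX cardsT card_ord; congr (_ * _).
have := cardsC [set x; y]; rewrite cards2 nxy card_ord; lia.
Qed.

Lemma part2_free s (x y : 'I_s) : 3 <= s -> x != y ->
  forall (VG : finType) (eG : rel VG), simple_graph eG ->
  ~ contains (complete_rel s) eG ->
  forall t (a b : 'I_t), 0 < t ->
  ~ contains (Fprime_t (complete_rel s) x y a b) (blowup_clique eG t).
Proof.
move=> hs nxy VG eG [symG irrG] nc t a b ht [f [finj fe]].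
set R := Fprime_t (complete_rel s) x y a b.
have Rcl : forall z p q, (z == x) || (z == y) -> p.1 != z -> q.1 != z -> p != q -> R p q.
  move=> z [w k] [w' k'] hz /= hw hw' ne.
  rewrite /R /Fprime_t /add_edge /blowup_clique /del_edge /complete_rel /=.
  case: (eqVneq w w') => [E|ne'].
    subst w'; have -> : k != k' by apply: contra ne => /eqP ->.
    by [].
  rewrite /=.
  by case/orP: hz => /eqP ?; subst z;
     rewrite ?(negbTE hw) ?(negbTE hw') /= ?andbF.
have fib : forall z, (z == x) || (z == y) -> forall w,
    w.1 \in [set p.1 | p in f @: [set p | p.1 != z]] -> w \in f @: [set p | p.1 != z].
  move=> z hz; apply: (full_fibers (eG := eG) ht _ nc); first lia.
    move=> u v /imsetP [p hp ->] /imsetP [q hq ->] ne; apply: fe.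
    apply: (Rcl z) => //; first by move: hp; rewrite inE.
      by move: hq; rewrite inE.
    by apply: contra ne => /eqP ->.
  by rewrite card_imset // card_avoid.
set q := (f (x,a)).1.
set q' := (f (y,b)).1.
set Z := [set p : 'I_s * 'I_t | (p.1 != x) && (p.1 != y)].
set PZ := [set p.1 | p in f @: Z].
have qY : q \notin [set p.1 | p in f @: [set p | p.1 != x]].
  have hx : (x == x) || (x == y) by rewrite eqxx.
  apply/negP => H; have := fib x hx (f (x,a)) H.
  by rewrite mem_imset // inE /= eqxx.
have qX : q' \notin [set p.1 | p in f @: [set p | p.1 != y]].
  have hy : (y == x) || (y == y) by rewrite eqxx orbT.
  apply/negP => H; have := fib y hy (f (y,b)) H.
  by rewrite mem_imset // inE /= eqxx.
have ZY : PZ \subset [set p.1 | p in f @: [set p | p.1 != x]].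
  by apply/imsetS/imsetS/subsetP => p; rewrite !inE => /andP [].
have ZX : PZ \subset [set p.1 | p in f @: [set p | p.1 != y]].
  by apply/imsetS/imsetS/subsetP => p; rewrite !inE => /andP [].
have qZ : q \notin PZ by apply: contra qY; apply: (subsetP ZY).
have q'Z : q' \notin PZ by apply: contra qX; apply: (subsetP ZX).
have qq' : q != q'.
  apply: contra qY => /eqP ->; apply/imsetP; exists (f (y,b)) => //.
  by rewrite mem_imset // inE /= eq_sym.
have cPZ : s - 2 <= #|PZ|.
  have := proj_card (f @: Z); rewrite card_imset // card_avoid2 // leq_pmul2r //.
set Cset := [set p : 'I_s * 'I_t | ((p.1 != x) && (p.1 != y)) || (p == (x,a)) || (p == (y,b))].
have Ccl : forall p p', p \in Cset -> p' \in Cset -> p != p' -> R p p'.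
  move=> p p'; rewrite !inE => hp hp' ne.
  case/orP: hp => [/orP [/andP [px py] | /eqP E] | /eqP E];
  case/orP: hp' => [/orP [/andP [px' py'] | /eqP E'] | /eqP E']; try subst p; try subst p'.
  - by apply: (Rcl x) => //; rewrite eqxx.
  - by apply: (Rcl y) => //; rewrite ?eqxx ?orbT.
  - by apply: (Rcl x) => //=; rewrite ?eqxx // eq_sym.
  - by apply: (Rcl y) => //; rewrite ?eqxx ?orbT.
  - by rewrite eqxx in ne.
  - by rewrite /R /Fprime_t /add_edge !eqxx orbT.
  - by apply: (Rcl x) => //=; rewrite ?eqxx // eq_sym.
  - by rewrite /R /Fprime_t /add_edge !eqxx !orbT.
  - by rewrite eqxx in ne.
set S := [set p.1 | p in f @: Cset].
apply: nc; apply: (@clique_contains _ _ s S).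
  have : q |: (q' |: PZ) \subset S.
    apply/subsetP => u; rewrite !inE => /orP [/eqP ->|/orP [/eqP ->|uZ]].
    + by apply/imsetP; exists (f (x,a)) => //; apply/imsetP; exists (x,a) => //; rewrite inE eqxx orbT.
    + by apply/imsetP; exists (f (y,b)) => //; apply/imsetP; exists (y,b) => //; rewrite inE eqxx !orbT.
    + move: uZ => /imsetP [w /imsetP [p hp ->] ->].
      apply/imsetP; exists (f p) => //; apply/imsetP; exists p => //.
      by move: hp; rewrite !inE => ->.
  move/subset_leq_card; rewrite cardsU1 cardsU1 !inE negb_or qq' qZ q'Z /=; lia.
move=> u v /imsetP [w /imsetP [p hp ->] ->] /imsetP [w' /imsetP [p' hp' ->] ->] ne.
have pp : p != p' by apply: contra ne => /eqP ->.
have := fe _ _ (Ccl _ _ hp hp' pp); rewrite /blowup_clique (negbTE ne) //.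
Qed.

Definition KV (m k : nat) : finType := {A : {set 'I_m} | #|A| == k}.
Definition kn (m k : nat) : rel (KV m k) := fun A B => [disjoint (val A : {set _}) & (val B : {set _})].
Arguments kn : clear implicits.

Lemma kn_simple m k : 0 < k -> simple_graph (kn m k).
Proof.
move=> k0; split; first by move=> A B; rewrite /kn disjoint_sym.
move=> A; rewrite /kn -setI_eq0 setIid -cards_eq0 (eqP (valP A)).
by move: k0; case: (k) => //.
Qed.

Lemma card_KV m k : #|KV m k| = 'C(m, k).
Proof.
rewrite card_sig -[m in RHS]card_ord -card_draws; apply: eq_card => A.
by rewrite !inE.
Qed.

Lemma kn_degree m k (A : KV m k) : degree (kn m k) A = 'C(m - k, k).
Proof.
rewrite /degree -(card_imset _ val_inj).
have -> : m - k = #|~: val A| by rewrite cardsCs setCK card_ord (eqP (valP A)).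
rewrite -cards_draws; apply: eq_card => X; rewrite !inE.
apply/imsetP/andP => [[B] | [sub cX]].
  by rewrite inE /kn => dB ->; rewrite (eqP (valP B)) eqxx -disjoints_subset disjoint_sym.
exists (exist _ X cX) => //.
by rewrite inE /kn /= disjoint_sym disjoints_subset.
Qed.

Lemma kn_free m k s : m < s * k -> ~ contains (complete_rel s) (kn m k).
Proof.
move=> hm [f [finj fe]].
have cA : forall i, #|val (f i)| = k by move=> i; exact: (eqP (valP (f i))).
pose g (p : 'I_s * 'I_k) : 'I_m := enum_val (cast_ord (esym (cA p.1)) p.2).
have ginj : injective g.
  move=> [i l] [i' l']; rewrite /g /=.
  case: (eqVneq i i') => [<- | ne].
    by move/enum_val_inj/cast_ord_inj => ->.
  move=> E; exfalso.
  have := fe _ _ ne; rewrite /kn => dis.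
  have := enum_valP (cast_ord (esym (cA i)) l).
  by rewrite E (disjointFl dis) // enum_valP.
have := leq_card g ginj; rewrite card_prod !card_ord; lia.
Qed.

Lemma kn_sat s k : 3 <= s -> 0 < k -> forall A B : KV (s * k).-1 k, A != B ->
  ~~ kn _ _ A B -> contains (complete_rel s) (add_edge (kn (s * k).-1 k) A B).
Proof.
move=> hs hk A B nAB nkn.
set m := (s * k).-1.
set C := ~: (val A :|: val B).
have cA := eqP (valP A); have cB := eqP (valP B).
have cC : (s - 2) * k <= #|C|.
  have h1 : 0 < #|val A :&: val B|.
    by rewrite card_gt0 setI_eq0.
  have := cardsU (val A) (val B); rewrite cA cB => hU.
  have := cardsC (val A :|: val B); rewrite card_ord -/C => hC.
  have hsk : 2 * k <= s * k by rewrite leq_mul2r; lia.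
  rewrite /m in hC; lia.
have H : #|{: 'I_(s - 2) * 'I_k}| <= #|C| by rewrite card_prod !card_ord.
pose g (p : 'I_(s - 2) * 'I_k) : 'I_m := enum_val (widen_ord H (enum_rank p)).
have ginj : injective g.
  move=> p q /enum_val_inj /(congr1 val) /= /val_inj /enum_rank_inj //.
have gC : forall p, g p \in C by move=> p; exact: enum_valP.
pose D (j : 'I_(s - 2)) : {set 'I_m} := [set g (j, l) | l : 'I_k].
have cD : forall j, #|D j| == k.
  move=> j; rewrite card_imset ?card_ord //.
  by move=> l l' /ginj [].
pose DK j : KV m k := exist _ (D j) (cD j).
have DA : forall j, kn _ _ A (DK j).
  move=> j; rewrite /kn /= disjoint_sym disjoints_subset.
  apply/subsetP => u /imsetP [l _ ->]; have := gC (j, l).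
  by rewrite !inE negb_or => /andP [].
have DB : forall j, kn _ _ B (DK j).
  move=> j; rewrite /kn /= disjoint_sym disjoints_subset.
  apply/subsetP => u /imsetP [l _ ->]; have := gC (j, l).
  by rewrite !inE negb_or => /andP [].
have DD : forall j j', j != j' -> kn _ _ (DK j) (DK j').
  move=> j j' ne; rewrite /kn /= disjoints_subset.
  apply/subsetP => u /imsetP [l _ ->]; rewrite inE.
  apply/imsetP => -[l' _ /ginj [E _]]; by rewrite E eqxx in ne.
have s2 : 0 < s - 2 by lia.
pose j0 : 'I_(s - 2) := Ordinal s2.
pose f (i : 'I_s) : KV m k :=
  if val i == 0 then A else if val i == 1 then B else DK (insubd j0 (val i - 2)).
have knsym : symmetric (kn m k) by case: (kn_simple m hk).
have knirr : irreflexive (kn m k) by case: (kn_simple m hk).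
have fe : forall i i', i != i' -> add_edge (kn m k) A B (f i) (f i').
  move=> i i' ne; rewrite /f /add_edge.
  have vne : val i != val i' by [].
  case: (eqVneq (val i) 0) => [i0|i0]; case: (eqVneq (val i') 0) => [i'0|i'0].
  - by rewrite i0 i'0 in vne.
  - case: (eqVneq (val i') 1) => [i'1|i'1] /=; first by rewrite !eqxx orbT.
    by rewrite DA.
  - case: (eqVneq (val i) 1) => [i1|i1] /=; first by rewrite !eqxx !orbT.
    by rewrite knsym DA.
  - case: (eqVneq (val i) 1) => [i1|i1]; case: (eqVneq (val i') 1) => [i'1|i'1] /=.
    + by rewrite i1 i'1 in vne.
    + by rewrite DB.
    + by rewrite knsym DB.
    + rewrite DD //.
      have li : val i < s := ltn_ord i.
      have li' : val i' < s := ltn_ord i'.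
      have vi : val i - 2 < s - 2 by move: li i0 i1; lia.
      have vi' : val i' - 2 < s - 2 by move: li' i'0 i'1; lia.
      apply/eqP => /(congr1 val); rewrite !insubdK ?inE // => E.
      have E2 : val i - 2 = val i' - 2 := E; move: E2 vne i0 i1 i'0 i'1; lia.
exists f; split => // i i' E.
apply/eqP; apply: contraT => ne.
have := fe i i' ne; rewrite E /add_edge knirr /=.
case/orP => /andP [/eqP E1 /eqP E2]; move: nAB; by rewrite -E1 -E2 eqxx.
Qed.

Lemma kn_Ksat s k : 3 <= s -> 0 < k ->
  F_saturated (complete_rel s) (kn (s * k).-1 k).
Proof.
move=> hs hk; split.
  apply: kn_free; have : 0 < s * k by rewrite muln_gt0; apply/andP; split => //; lia.
  lia.
by move=> u v; apply: kn_sat.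
Qed.

Lemma blowup_simple (V : finType) (e : rel V) t : simple_graph e -> simple_graph (blowup_clique e t).
Proof.
case=> sym irr; split.
  by move=> p q; rewrite /blowup_clique eq_sym (eq_sym p.2) sym.
by move=> p; rewrite /blowup_clique !eqxx /= irr.
Qed.

Lemma edges_bound (V : finType) (e : rel V) D : (forall v, degree e v = D) ->
  num_edges e <= #|V| * D.
Proof.
move=> hD; rewrite /num_edges.
have -> : #|[set p : V * V | e p.1 p.2]| = \sum_(i : V) degree e i.
  transitivity (\sum_(i : V) \sum_(j : V) (if e i j then 1 else 0)); last first.
    apply: eq_bigr => i _; rewrite /degree -sum1_card [RHS]big_mkcond /=.
    by apply: eq_bigr => j _; rewrite !inE.
  rewrite pair_bigA /= -sum1_card big_mkcond /=.
  by apply: eq_bigr => p _; rewrite !inE.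
rewrite (eq_bigr (fun _ => D)) // sum_nat_const.
rewrite -divn2; exact: leq_div.
Qed.

Definition tr (W : finType) (H : rel W) : rel 'I_#|W| :=
  fun i j => H (enum_val i) (enum_val j).

Lemma tr_simple (W : finType) (H : rel W) : simple_graph H -> simple_graph (tr H).
Proof. by case=> sym irr; split; [move=> i j; exact: sym | move=> i; exact: irr]. Qed.

Lemma tr_degree (W : finType) (H : rel W) i : degree (tr H) i = degree H (enum_val i).
Proof.
rewrite /degree -(card_imset _ (@enum_val_inj _ W)); apply: eq_card => w.
rewrite [in RHS]inE; apply/imsetP/idP => [[j]|hw].
  by rewrite inE /tr => h ->.
by exists (enum_rank w); rewrite ?inE /tr enum_rankK.
Qed.

Lemma tr_regular (W : finType) (H : rel W) D : (forall v, degree H v = D) ->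
  forall i, degree (tr H) i = D.
Proof. by move=> hD i; rewrite tr_degree hD. Qed.

Lemma tr_sat (VF W : finType) (eF : rel VF) (H : rel W) :
  F_saturated eF H -> F_saturated eF (tr H).
Proof.
case=> nc sat; split.
  move=> [f [finj fe]]; apply: nc; exists (fun v => enum_val (f v)); split.
    by move=> u v /enum_val_inj /finj.
  by move=> u v /fe.
move=> u v ne nuv.
have ne' : enum_val u != enum_val v by rewrite (inj_eq enum_val_inj).
have [f [finj fe]] := sat _ _ ne' nuv.
exists (fun p => enum_rank (f p)); split.
  by move=> p q /enum_rank_inj /finj.
move=> p q /fe; rewrite /add_edge /tr !enum_rankK.
by rewrite -!(inj_eq enum_val_inj) !enum_rankK.
Qed.

Lemma binom_step s k j : 0 < k -> 2 <= s -> j < k ->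
  s * 'C((s * k).-1 - j.+1, k) <= (s - 1) * 'C((s * k).-1 - j, k).
Proof.
move=> hk hs hj.
have hsk : 2 * k <= s * k by rewrite leq_mul2r hs orbT.
set M := (s * k).-1 - j.
have M0 : 0 < M by rewrite /M; lia.
have hM : (s * k).-1 - j.+1 = M.-1 by rewrite /M subnS.
have E := mul_bin_down M k.
have le : s * (M - k) <= (s - 1) * M.
  have : M <= s * k by rewrite /M; lia.
  nia.
rewrite hM -(leq_pmul2l M0).
have -> : M * (s * 'C(M.-1, k)) = s * (M - k) * 'C(M, k) by rewrite mulnCA E mulnA.
have -> : M * ((s - 1) * 'C(M, k)) = (s - 1) * M * 'C(M, k) by rewrite mulnA (mulnC M).
by rewrite leq_mul2r le orbT.
Qed.

Lemma binom_chain s k : 0 < k -> 2 <= s -> forall j, j <= k ->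
  'C((s * k).-1 - j, k) * (s - 1 + j) <= (s - 1) * 'C((s * k).-1, k).
Proof.
move=> hk hs; elim => [_|j IH hj]; first by rewrite subn0 addn0 mulnC.
have st := binom_step hk hs hj.
have IH' := IH (ltnW hj).
move: st IH'.
set c1 := 'C(_ - j.+1, k); set c0 := 'C(_ - j, k); set N := 'C(_, k) => st IH'.
have s0 : 0 < s by lia.
rewrite -(leq_pmul2l s0).
have h1 := leq_mul st (leqnn (s + j)).
have h2 : (s - 1) * (s + j) <= (s - 1 + j) * s by nia.
have h3 := leq_mul (leqnn c0) h2.
have h4 := leq_mul IH' (leqnn s).
nia.
Qed.

Lemma part2_sat s (x y : 'I_s) : 3 <= s -> x != y ->
   forall (VG : finType) (eG : rel VG), simple_graph eG ->
     F_saturated (complete_rel s) eG ->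
   forall (t : nat), (2 <= t)%N -> forall a b : 'I_t,
     F_saturated (Fprime_t (complete_rel s) x y a b) (blowup_clique eG t).
Proof.
move=> hs nxy VG eG sG satG t ht a b; split.
  apply: part2_free => //; [by case: satG | lia].
move=> u v ne nuv.
have [f [finj fe _]] := part1_over (complete_simple s) (@complete_et s) nxy satG a b ne nuv.
by exists f.
Qed.

Import Order.TTheory GRing.Theory Num.Theory.
Local Open Scope ring_scope.

Lemma part3 (s t : nat) : (3 <= s)%N -> (2 <= t)%N -> forall x y : 'I_s, x != y ->
   forall a b : 'I_t,
     liminf_rsat_over_n2_is_0 (Fprime_t (complete_rel s) x y a b).
Proof.
move=> hs ht x y nxy a b eps heps N.
pose B := Num.bound (2%:R * (s - 1)%N%:R / eps).
have hB : 2%:R * (s - 1)%N%:R / eps < B%:R.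
  apply: Num.Theory.archi_boundP; apply: divr_ge0 => //; last exact: ltW.
  by rewrite mulr_ge0 // ler0n.
pose k := (N * (s - 1) + B).+1.
have hk : (0 < k)%N by [].
pose m := (s * k).-1.
have sG := kn_simple m hk.
have KS := kn_Ksat hs hk.
pose NN := 'C(m, k).
pose d := 'C(m - k, k).
have degG : forall v, degree (kn m k) v = d by move=> v; rewrite kn_degree.
pose D := (t.-1 + d * t)%N.
have degH := @blowup_degree _ _ t d sG degG.
pose n := #|{: KV m k * 'I_t}|.
have hn : n = (NN * t)%N by rewrite /n card_prod card_KV card_ord.
have hsk : (3 * k <= s * k)%N by rewrite leq_mul2r hs orbT.
have chain := binom_chain hk (ltnW hs) (leqnn k).
rewrite -/m -/d -/NN in chain.
have d1 : (1 <= d)%N by rewrite bin_gt0 /m; lia.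
have hkN : (N * (s - 1) < k)%N by rewrite /k; lia.
have NNN : (N < NN)%N.
  have : (N * (s - 1) < NN * (s - 1))%N.
    apply: (leq_trans hkN); apply: (@leq_trans (d * (s - 1 + k))%N); first nia.
    by rewrite (mulnC NN).
  by rewrite ltn_pmul2r //; lia.
exists n, (n * D)%N; split; [|split].
- rewrite hn; apply: (leq_trans (ltnW NNN)); rewrite leq_pmulr //; lia.
- exists (tr (blowup_clique (kn m k) t)); split.
  + exact/tr_simple/blowup_simple.
  + by exists D; apply: tr_regular.
  + apply: tr_sat; exact: part2_sat.
  + by apply: leq_trans (edges_bound (tr_regular degH)) _; rewrite card_ord.
have A : ((d + 1) * (s - 1 + k) <= 2 * (s - 1) * NN)%N by nia.
have AR : (d + 1)%:R * (s - 1 + k)%:R <= 2%:R * (s - 1)%:R * NN%:R :> rat.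
  by rewrite -!natrM ler_nat.
have s1 : (0 < s - 1)%N by lia.
have epsk : 2%:R * (s - 1)%:R < eps * (s - 1 + k)%:R :> rat.
  have : B%:R <= (s - 1 + k)%:R :> rat by rewrite ler_nat /k; lia.
  move: hB; rewrite ltr_pdivrMr // => h1 h2.
  apply: (lt_le_trans h1); rewrite mulrC ler_pM2l //.
have NNpos : 0 < NN%:R :> rat by rewrite ltr0n; lia.
have Ypos : 0 < (s - 1 + k)%:R :> rat by rewrite ltr0n; lia.
have dlt : (d + 1)%:R < eps * NN%:R :> rat.
  rewrite -(ltr_pM2r Ypos).
  apply: (le_lt_trans AR).
  nra.
have DtR : D%:R <= t%:R * (d + 1)%:R :> rat.
  rewrite -natrM ler_nat /D; nia.
have tpos : 0 < t%:R :> rat by rewrite ltr0n; lia.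
have Dlt : D%:R < t%:R * (eps * NN%:R) :> rat.
  by apply: (le_lt_trans DtR); rewrite ltr_pM2l.
have npos : 0 < n%:R :> rat by rewrite hn ltr0n muln_gt0; apply/andP; split; lia.
rewrite natrM natrX hn natrM.
have Dlt' : D%:R < eps * (NN%:R * t%:R) by nra.
by rewrite expr2 mulrCA ltr_pM2l // mulr_gt0.
Qed.

Local Close Scope ring_scope.

Theorem theorem3p1 :
  (* general edge-transitive F *)
  (forall (VF : finType) (eF : rel VF), simple_graph eF -> edge_transitive eF ->
   forall x y : VF, eF x y ->
   forall (VG : finType) (eG : rel VG), simple_graph eG -> regular eG ->
     F_saturated eF eG ->
   forall (t : nat), (2 <= t)%N -> forall a b : 'I_t,
     regular (blowup_clique eG t) /\
     F_oversaturated (Fprime_t eF x y a b) (blowup_clique eG t))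
  /\
  (* F = K_s, s >= 3 *)
  (forall (s : nat), (3 <= s)%N -> forall x y : 'I_s, x != y ->
   forall (VG : finType) (eG : rel VG), simple_graph eG -> regular eG ->
     F_saturated (complete_rel s) eG ->
   forall (t : nat), (2 <= t)%N -> forall a b : 'I_t,
     F_saturated (Fprime_t (complete_rel s) x y a b) (blowup_clique eG t))
  /\
  (forall (s t : nat), (3 <= s)%N -> (2 <= t)%N -> forall x y : 'I_s, x != y ->
   forall a b : 'I_t,
     liminf_rsat_over_n2_is_0 (Fprime_t (complete_rel s) x y a b)).
Proof.
split; [|split].
- move=> VF eF sF et x y exy VG eG sG rG satG t ht a b; split.
    exact: blowup_regular.
  exact: part1_over.
- move=> s hs x y nxy VG eG sG _ satG t ht a b; exact: part2_sat.
- move=> s t hs ht x y nxy a b; exact: part3.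
Qed.
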